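(* Let $\langle [n],\{v_a\}_{a\in[n]}\rangle$ be a cake-division instance, let $\alpha\ge1$, and let $\mathcal{I}$ be an $\alpha$-approximately envy-free allocation. Then for every $\rho\in(0,1]$ and every allocation $\mathcal{I}^*$, $$\mathrm{M}_\rho(\mathcal{I}^* )\ \le\ 2\alpha\,2^{1/\rho}\,n^{\frac{\rho}{\rho+1}}\ \mathrm{M}_\rho(\mathcal{I}).$$
   Context: The cake is $[0,1]$. Each agent's valuation $v_a$ assigns a value $v_a(I)\ge0$ to every interval $I\subseteq[0,1]$ and is normalized ($v_a([0,1])=1$), divisible (for every interval $[x,y]$ and $\lambda\in[0,1]$ there is $z\in[x,y]$ with $v_a([x,z])=\lambda v_a([x,y])$), and sigma additive ($v_a(I\cup J)=v_a(I)+v_a(J)$ for disjoint intervals). Intervals meeting only at an endpoint are regarded as disjoint. An allocation is a tuple $\mathcal{I}=\{I_1,\dots,I_n\}$ of pairwise-disjoint (possibly empty) intervals with $\bigcup_aI_a=[0,1]$, $I_a$ going to agent $a$. For $\alpha\ge1$, $\mathcal{I}$ is $\alpha$-approximately envy-free if $v_a(I_a)\ge\frac1\alpha v_a(I_b)$ for all $a,b$. The $\rho$-mean welfare is $\mathrm{M}_\rho(\mathcal{I})=\left(\frac1n\sum_{a=1}^n[v_a(I_a)]^\rho\right)^{1/\rho}$. *)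

(* Defs.v *)
From Stdlib Require Import Reals Lra List.
Open Scope R_scope.

(* A valuation on the cake [0,1]: v x y is the value of the interval [x,y]
   (for 0 <= x <= y <= 1).  Endpoints carry no mass (v x x = 0 follows
   from additivity), so closed/open intervals are identified. *)
Definition is_valuation (v : R -> R -> R) : Prop :=
  (forall x y, 0 <= x -> x <= y -> y <= 1 -> 0 <= v x y) /\
  v 0 1 = 1 /\
  (forall x y lam, 0 <= x -> x <= y -> y <= 1 -> 0 <= lam <= 1 ->
     exists z, x <= z <= y /\ v x z = lam * v x y) /\
  (forall x y z, 0 <= x -> x <= y -> y <= z -> z <= 1 ->
     v x z = v x y + v y z).

(* An interval is given by its endpoints (l, r) with 0 <= l <= r <= 1;
   an empty piece is represented by a degenerate interval [x,x]. *)
Definition is_interval (I : R * R) : Prop :=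
  0 <= fst I /\ fst I <= snd I /\ snd I <= 1.

Definition is_allocation (n : nat) (I : nat -> R * R) : Prop :=
  (forall a, (a < n)%nat -> is_interval (I a)) /\
  (forall a b, (a < n)%nat -> (b < n)%nat -> a <> b ->
     snd (I a) <= fst (I b) \/ snd (I b) <= fst (I a)) /\
  (forall x, 0 <= x <= 1 -> exists a, (a < n)%nat /\ fst (I a) <= x <= snd (I a)).

Definition val (v : nat -> R -> R -> R) (a : nat) (J : R * R) : R :=
  v a (fst J) (snd J).

Definition alpha_EF (n : nat) (v : nat -> R -> R -> R) (alpha : R)
  (I : nat -> R * R) : Prop :=
  forall a b, (a < n)%nat -> (b < n)%nat -> val v a (I a) >= / alpha * val v a (I b).

Definition rpow (x y : R) : R := if Req_EM_T x 0 then 0 else Rpower x y.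

Definition Rsum (n : nat) (f : nat -> R) : R :=
  fold_right Rplus 0 (map f (seq 0 n)).

Definition Mrho (n : nat) (v : nat -> R -> R -> R) (rho : R) (I : nat -> R * R) : R :=
  rpow (/ INR n * Rsum n (fun a => rpow (val v a (I a)) rho)) (/ rho).

(* Main.v *)
Require Import Defs.
From Stdlib Require Import Reals Lra Lia List.
Open Scope R_scope.

Definition SL (f : nat -> R) (L : list nat) : R := fold_right Rplus 0 (map f L).

Lemma SL_cons f b L : SL f (b :: L) = f b + SL f L.
Proof. reflexivity. Qed.

Lemma SL_nonneg f L : (forall b, In b L -> 0 <= f b) -> 0 <= SL f L.
Proof.
  induction L as [|c L IH]; intros H; unfold SL in *; simpl. lra.
  assert (0 <= f c) by (apply H; left; auto).
  assert (0 <= SL f L) by (apply IH; intros; apply H; right; auto).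
  unfold SL in *; lra.
Qed.

Lemma SL_le f g L : (forall b, In b L -> f b <= g b) -> SL f L <= SL g L.
Proof.
  induction L as [|c L IH]; intros H; unfold SL in *; simpl. lra.
  assert (f c <= g c) by (apply H; left; auto).
  assert (SL f L <= SL g L) by (apply IH; intros; apply H; right; auto).
  unfold SL in *; simpl; lra.
Qed.

Lemma SL_remove_le f b0 L : (forall b, In b L -> 0 <= f b) ->
  SL f (remove Nat.eq_dec b0 L) <= SL f L.
Proof.
  induction L as [|c L IH]; intros H; unfold SL in *; simpl. lra.
  assert (0 <= f c) by (apply H; left; auto).
  assert (SL f (remove Nat.eq_dec b0 L) <= SL f L) by (apply IH; intros; apply H; right; auto).
  destruct (Nat.eq_dec b0 c); simpl; unfold SL in *; simpl; lra.
Qed.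

Lemma SL_remove f b0 L : (forall b, In b L -> 0 <= f b) -> In b0 L ->
  f b0 + SL f (remove Nat.eq_dec b0 L) <= SL f L.
Proof.
  induction L as [|c L IH]; intros H Hin; simpl in Hin. destruct Hin.
  assert (0 <= f c) by (apply H; left; auto).
  destruct (Nat.eq_dec b0 c) as [->|Hne].
  - assert (SL f (remove Nat.eq_dec c L) <= SL f L) by (apply SL_remove_le; intros; apply H; right; auto).
    simpl; destruct Nat.eq_dec; try congruence; unfold SL in *; simpl; lra.
  - destruct Hin as [Hin|Hin]; [congruence|].
    assert (f b0 + SL f (remove Nat.eq_dec b0 L) <= SL f L) by (apply IH; auto; intros; apply H; right; auto).
    simpl; destruct Nat.eq_dec; try congruence; unfold SL in *; simpl; lra.
Qed.

Section Val.
Variable w : R -> R -> R.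
Hypothesis Hw : is_valuation w.

Lemma w_nonneg x y : 0 <= x -> x <= y -> y <= 1 -> 0 <= w x y.
Proof. destruct Hw as [H _]; auto. Qed.

Lemma w_add x y z : 0 <= x -> x <= y -> y <= z -> z <= 1 -> w x z = w x y + w y z.
Proof. destruct Hw as [_ [_ [_ H]]]; auto. Qed.

Lemma w_zero x : 0 <= x <= 1 -> w x x = 0.
Proof. intros. pose proof (w_add x x x). lra. Qed.

Lemma w_mono x y x' y' : 0 <= x -> x <= x' -> x' <= y' -> y' <= y -> y <= 1 ->
  w x' y' <= w x y.
Proof.
  intros.
  rewrite (w_add x x' y) by lra. rewrite (w_add x' y' y) by lra.
  pose proof (w_nonneg x x'). pose proof (w_nonneg y' y). lra.
Qed.
End Val.

Definition clip (w : R -> R -> R) (l r : R) (J : R * R) : R :=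
  if Rle_dec (Rmax l (fst J)) (Rmin r (snd J))
  then w (Rmax l (fst J)) (Rmin r (snd J)) else 0.

Lemma clip_nonneg w l r J : is_valuation w -> 0 <= l -> r <= 1 -> 0 <= clip w l r J.
Proof.
  intros Hw Hl Hr. unfold clip. destruct Rle_dec; [|lra].
  apply (w_nonneg w Hw); auto.
  - pose proof (Rmax_l l (fst J)); lra.
  - pose proof (Rmin_l r (snd J)); lra.
Qed.

Lemma clip_mono_r w l r r' J : is_valuation w -> 0 <= l -> r' <= r -> r <= 1 ->
  clip w l r' J <= clip w l r J.
Proof.
  intros Hw Hl Hrr Hr. unfold clip.
  pose proof (Rmax_l l (fst J)). pose proof (Rmin_l r (snd J)).
  pose proof (Rmin_l r' (snd J)).
  assert (Rmin r' (snd J) <= Rmin r (snd J)).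
  { unfold Rmin; repeat destruct Rle_dec; lra. }
  destruct (Rle_dec (Rmax l (fst J)) (Rmin r' (snd J))).
  - destruct Rle_dec; [|lra].
    apply (w_mono w Hw); lra.
  - destruct Rle_dec; [|lra]. apply (w_nonneg w Hw); lra.
Qed.

Lemma clip_le_piece w l r J : is_valuation w -> 0 <= l -> r <= 1 -> is_interval J ->
  clip w l r J <= w (fst J) (snd J).
Proof.
  intros Hw Hl Hr [HJ1 [HJ2 HJ3]]. unfold clip.
  pose proof (Rmax_l l (fst J)). pose proof (Rmin_l r (snd J)).
  pose proof (Rmax_r l (fst J)). pose proof (Rmin_r r (snd J)).
  destruct Rle_dec.
  - apply (w_mono w Hw); lra.
  - apply (w_nonneg w Hw); lra.
Qed.

Lemma clip_nov w l r J : is_valuation w -> 0 <= l -> r <= 1 ->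
  ~ (Rmax l (fst J) < Rmin r (snd J)) -> clip w l r J = 0.
Proof.
  intros Hw Hl Hr H. unfold clip.
  pose proof (Rmax_l l (fst J)). pose proof (Rmin_l r (snd J)).
  destruct Rle_dec; auto.
  assert (Rmax l (fst J) = Rmin r (snd J)) as -> by lra.
  apply (w_zero w Hw). lra.
Qed.

Definition inJ (J : R * R) x := fst J <= x <= snd J.

Lemma closure (J : nat -> R * R) L : forall l c, l < c ->
  (forall x, l <= x < c -> exists b, In b L /\ inJ (J b) x) ->
  exists b, In b L /\ inJ (J b) c.
Proof.
  induction L as [|b L IH]; intros l c Hlc H.
  - destruct (H l) as [b [[] _]]. lra.
  - destruct (Rle_dec (fst (J b)) c) as [H1|H1];
    [destruct (Rle_dec c (snd (J b))) as [H2|H2]|].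
    + exists b; split; [left; auto| split; auto].
    + assert (Hm : Rmax l (snd (J b)) < c) by (unfold Rmax; destruct Rle_dec; lra).
      destruct (IH ((Rmax l (snd (J b)) + c)/2) c) as [b' [Hb' Hc]]; [lra| |].
      * intros x Hx. destruct (H x) as [b' [[<-|Hb'] Hx']].
        -- pose proof (Rmax_l l (snd (J b))); lra.
        -- pose proof (Rmax_r l (snd (J b))). unfold inJ in Hx'. lra.
        -- exists b'; auto.
      * exists b'; split; [right|]; auto.
    + destruct (IH l c) as [b' [Hb' Hc]]; [lra| |].
      * intros x Hx. destruct (H x) as [b' [[<-|Hb'] Hx']]; [lra| |].
        -- unfold inJ in Hx'; lra.
        -- exists b'; auto.
      * exists b'; split; [right|]; auto.
Qed.

Lemma cover_aux w (Hw : is_valuation w) (J : nat -> R * R) : forall k L,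
  (length L <= k)%nat ->
  (forall b, In b L -> is_interval (J b)) ->
  forall l r, 0 <= l -> l <= r -> r <= 1 ->
  (forall x, l <= x <= r -> exists b, In b L /\ inJ (J b) x) ->
  w l r <= SL (fun b => clip w l r (J b)) L.
Proof.
  induction k as [|k IH]; intros L HL HJ l r H0 H1 H2 Hc.
  - destruct (Hc r) as [b [Hb _]]; [lra|]. destruct L; simpl in *; [destruct Hb|lia].
  - destruct (Hc r) as [b0 [Hb0 Hr0]]; [lra|].
    assert (Hnn : forall r', r' <= 1 -> forall b, In b L -> 0 <= clip w l r' (J b))
      by (intros; apply clip_nonneg; auto).
    pose proof (SL_remove (fun b => clip w l r (J b)) b0 L (Hnn r H2) Hb0) as Hrem.
    simpl in Hrem. unfold inJ in Hr0.
    destruct (Rle_dec (fst (J b0)) l) as [Hle|Hlt].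
    + assert (clip w l r (J b0) = w l r).
      { unfold clip. rewrite Rmax_left by lra. rewrite Rmin_left by lra.
        destruct Rle_dec; [auto|lra]. }
      pose proof (SL_nonneg (fun b => clip w l r (J b)) (remove Nat.eq_dec b0 L)).
      assert (0 <= SL (fun b => clip w l r (J b)) (remove Nat.eq_dec b0 L)).
      { apply SL_nonneg. intros b Hb. apply in_remove in Hb. apply Hnn; tauto. }
      lra.
    + set (l0 := fst (J b0)) in *.
      assert (Hc0 : forall x, l <= x < l0 -> exists b, In b (remove Nat.eq_dec b0 L) /\ inJ (J b) x).
      { intros x Hx. destruct (Hc x) as [b [Hb Hbx]]; [lra|].
        exists b; split; auto. apply in_in_remove; auto. intros ->. unfold inJ in Hbx.
        fold l0 in Hbx. lra. }
      assert (Hc1 : forall x, l <= x <= l0 -> exists b, In b (remove Nat.eq_dec b0 L) /\ inJ (J b) x).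
      { intros x Hx. destruct (Rlt_le_dec x l0). apply Hc0; lra.
        replace x with l0 by lra. apply (closure J _ l); auto. lra. }
      assert (IHa : w l l0 <= SL (fun b => clip w l l0 (J b)) (remove Nat.eq_dec b0 L)).
      { apply IH; auto.
        - pose proof (remove_length_lt Nat.eq_dec L b0 Hb0). lia.
        - intros b Hb. apply in_remove in Hb. apply HJ; tauto.
        - lra. - lra. }
      assert (SL (fun b => clip w l l0 (J b)) (remove Nat.eq_dec b0 L) <=
              SL (fun b => clip w l r (J b)) (remove Nat.eq_dec b0 L)).
      { apply SL_le. intros b Hb. apply clip_mono_r; auto; lra. }
      assert (clip w l r (J b0) = w l0 r).
      { unfold clip. idtac "XX"; rewrite Rmax_right; [|fold l0; lra]. rewrite Rmin_left by lra. fold l0.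
        destruct Rle_dec; [auto|lra]. }
      rewrite (w_add w Hw l l0 r) by lra. lra.
Qed.

Lemma Rsum_SL n f : Rsum n f = SL f (seq 0 n).
Proof. reflexivity. Qed.

Lemma Rsum_S n f : Rsum (S n) f = Rsum n f + f n.
Proof.
  unfold Rsum. rewrite seq_S, map_app, fold_right_app. simpl.
  generalize (map f (seq 0 n)). induction l; simpl; lra.
Qed.

Lemma Rsum_0 f : Rsum 0 f = 0.
Proof. reflexivity. Qed.

Lemma Rsum_le n f g : (forall a, (a < n)%nat -> f a <= g a) -> Rsum n f <= Rsum n g.
Proof.
  induction n; intros H. rewrite !Rsum_0; lra.
  rewrite !Rsum_S. pose proof (H n ltac:(lia)).
  assert (Rsum n f <= Rsum n g) by (apply IHn; intros; apply H; lia). lra.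
Qed.

Lemma Rsum_ext n f g : (forall a, (a < n)%nat -> f a = g a) -> Rsum n f = Rsum n g.
Proof.
  intros H; apply Rle_antisym; apply Rsum_le; intros a Ha; rewrite H; auto; lra.
Qed.

Lemma Rsum_plus n f g : Rsum n (fun a => f a + g a) = Rsum n f + Rsum n g.
Proof. induction n. rewrite !Rsum_0; lra. rewrite !Rsum_S, IHn. lra. Qed.

Lemma Rsum_scal n f c : Rsum n (fun a => f a * c) = Rsum n f * c.
Proof. induction n. rewrite !Rsum_0; lra. rewrite !Rsum_S, IHn. lra. Qed.

Lemma Rsum_const n c : Rsum n (fun _ => c) = INR n * c.
Proof. induction n. rewrite !Rsum_0; simpl; lra. rewrite !Rsum_S, IHn, S_INR. lra. Qed.

Lemma Rsum_nonneg n f : (forall a, (a < n)%nat -> 0 <= f a) -> 0 <= Rsum n f.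
Proof. intros H. replace 0 with (Rsum n (fun _ => 0)) at 1.
  apply Rsum_le; auto. rewrite Rsum_const; ring. Qed.

Lemma Rsum_swap n m (f : nat -> nat -> R) :
  Rsum n (fun a => Rsum m (fun b => f a b)) = Rsum m (fun b => Rsum n (fun a => f a b)).
Proof.
  induction n. rewrite Rsum_0.
  - transitivity (Rsum m (fun _ => 0)). rewrite Rsum_const; ring. apply Rsum_ext. intros; rewrite Rsum_0; auto.
  - rewrite Rsum_S, IHn, <- Rsum_plus. apply Rsum_ext. intros; rewrite Rsum_S; auto.
Qed.

Lemma at_most_one n f : (forall b, (b < n)%nat -> f b = 0 \/ f b = 1) ->
  (forall b b', (b < n)%nat -> (b' < n)%nat -> f b = 1 -> f b' = 1 -> b = b') ->
  Rsum n f <= 1.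
Proof.
  induction n; intros H01 Hu. rewrite Rsum_0; lra.
  rewrite Rsum_S. destruct (H01 n ltac:(lia)) as [Hn|Hn].
  - rewrite Hn. assert (Rsum n f <= 1); [|lra]. apply IHn.
    + intros; apply H01; lia.
    + intros; apply Hu; auto; lia.
  - assert (Rsum n f = Rsum n (fun _ => 0)).
    { apply Rsum_ext. intros b Hb. destruct (H01 b ltac:(lia)) as [|Hb1]; auto.
      specialize (Hu b n ltac:(lia) ltac:(lia) Hb1 Hn). lia. }
    rewrite H, Rsum_const. lra.
Qed.

Definition ov (J K : R * R) : Prop := Rmax (fst J) (fst K) < Rmin (snd J) (snd K).

Definition ovind (J K : R * R) : R := if Rlt_dec (Rmax (fst J) (fst K)) (Rmin (snd J) (snd K)) then 1 else 0.

Lemma ov_facts J K : ov J K ->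
  fst J < snd J /\ fst J < snd K /\ fst K < snd J /\ fst K < snd K.
Proof.
  unfold ov. intros H.
  pose proof (Rmax_l (fst J) (fst K)). pose proof (Rmax_r (fst J) (fst K)).
  pose proof (Rmin_l (snd J) (snd K)). pose proof (Rmin_r (snd J) (snd K)). lra.
Qed.

Lemma count_pairs n (Is I : nat -> R * R) :
  is_allocation n Is -> is_allocation n I ->
  Rsum n (fun a => Rsum n (fun b => ovind (Is a) (I b))) <= 2 * INR n.
Proof.
  intros [_ [Ds _]] [_ [D _]].
  set (i1 := fun a b => if Rlt_dec (Rmax (fst (Is a)) (fst (I b))) (Rmin (snd (Is a)) (snd (I b)))
             then (if Rle_dec (snd (Is a)) (snd (I b)) then 1 else 0) else 0).
  set (i2 := fun a b => if Rlt_dec (Rmax (fst (Is a)) (fst (I b))) (Rmin (snd (Is a)) (snd (I b)))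
             then (if Rle_dec (snd (Is a)) (snd (I b)) then 0 else 1) else 0).
  assert (E : Rsum n (fun a => Rsum n (fun b => ovind (Is a) (I b))) =
     Rsum n (fun a => Rsum n (fun b => i1 a b)) + Rsum n (fun b => Rsum n (fun a => i2 a b))).
  { rewrite <- (Rsum_swap n n i2), <- Rsum_plus. apply Rsum_ext; intros a Ha.
    rewrite <- Rsum_plus. apply Rsum_ext; intros b Hb. unfold ovind, i1, i2.
    destruct Rlt_dec; [destruct Rle_dec|]; lra. }
  rewrite E.
  assert (Rsum n (fun a => Rsum n (fun b => i1 a b)) <= Rsum n (fun _ => 1)).
  { apply Rsum_le; intros a Ha. apply at_most_one.
    - intros b Hb; unfold i1; destruct Rlt_dec; [destruct Rle_dec|]; auto.
    - intros b b' Hb Hb'. unfold i1.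
      destruct (Rlt_dec _ _) as [o1|]; [destruct Rle_dec as [e1|]|]; try lra; intros _.
      destruct (Rlt_dec _ _) as [o2|]; [destruct Rle_dec as [e2|]|]; try lra; intros _.
      destruct (Nat.eq_dec b b') as [|Hne]; auto.
      apply ov_facts in o1; apply ov_facts in o2.
      destruct (D b b' Hb Hb' Hne); lra. }
  assert (Rsum n (fun b => Rsum n (fun a => i2 a b)) <= Rsum n (fun _ => 1)).
  { apply Rsum_le; intros b Hb. apply at_most_one.
    - intros a Ha; unfold i2; destruct Rlt_dec; [destruct Rle_dec|]; auto.
    - intros a a' Ha Ha'. unfold i2.
      destruct (Rlt_dec _ _) as [o1|]; [destruct Rle_dec as [|e1]|]; try lra; intros _.
      destruct (Rlt_dec _ _) as [o2|]; [destruct Rle_dec as [|e2]|]; try lra; intros _.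
      destruct (Nat.eq_dec a a') as [|Hne]; auto.
      apply ov_facts in o1; apply ov_facts in o2.
      destruct (Ds a a' Ha Ha' Hne); lra. }
  rewrite Rsum_const in *. lra.
Qed.

Lemma cover_alloc w n I : is_valuation w -> is_allocation n I ->
  forall l r, 0 <= l -> l <= r -> r <= 1 ->
  w l r <= Rsum n (fun b => clip w l r (I b)).
Proof.
  intros Hw [HI [_ HC]] l r H0 H1 H2. rewrite Rsum_SL.
  apply (cover_aux w Hw I n); auto.
  - rewrite length_seq; lia.
  - intros b Hb. apply in_seq in Hb. apply HI; lia.
  - intros x Hx. destruct (HC x) as [b [Hb Hx']]; [lra|]. exists b; split; auto.
    apply in_seq; lia.
Qed.

Lemma EF_le n v alpha I a b : 1 <= alpha -> alpha_EF n v alpha I -> (a < n)%nat -> (b < n)%nat ->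
  val v a (I b) <= alpha * val v a (I a).
Proof.
  intros Ha H Han Hbn. specialize (H a b Han Hbn).
  apply Rge_le in H. apply Rmult_le_compat_l with (r := alpha) in H; [|lra].
  rewrite <- Rmult_assoc, Rinv_r in H by lra. lra.
Qed.

Lemma lower_bound n v alpha I a : (forall a, (a < n)%nat -> is_valuation (v a)) ->
  1 <= alpha -> is_allocation n I -> alpha_EF n v alpha I -> (a < n)%nat ->
  1 <= INR n * (alpha * val v a (I a)).
Proof.
  intros Hv Ha HI HEF Han. pose proof (Hv a Han) as Hw.
  assert (H1 : v a 0 1 = 1) by (destruct Hw as [_ [H _]]; auto).
  pose proof (cover_alloc (v a) n I Hw HI 0 1 ltac:(lra) ltac:(lra) ltac:(lra)) as H.
  rewrite <- Rsum_const. rewrite H1 in H. eapply Rle_trans; [apply H|].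
  apply Rsum_le. intros b Hb. eapply Rle_trans; [apply clip_le_piece; auto; try lra|].
  - destruct HI as [HI _]; apply HI; auto.
  - apply (EF_le n v alpha I a b); auto.
Qed.

Lemma upper_bound n v alpha I Js a : (forall a, (a < n)%nat -> is_valuation (v a)) ->
  1 <= alpha -> is_allocation n I -> is_allocation n Js -> alpha_EF n v alpha I -> (a < n)%nat ->
  val v a (Js a) <= Rsum n (fun b => ovind (Js a) (I b)) * (alpha * val v a (I a)).
Proof.
  intros Hv Ha HI HJs HEF Han. pose proof (Hv a Han) as Hw.
  destruct (proj1 HJs a Han) as [H0 [H1 H2]].
  pose proof (cover_alloc (v a) n I Hw HI (fst (Js a)) (snd (Js a)) H0 H1 H2) as H.
  unfold val at 1. eapply Rle_trans; [apply H|]. rewrite <- Rsum_scal.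
  apply Rsum_le. intros b Hb. unfold ovind. destruct Rlt_dec as [o|o].
  - rewrite Rmult_1_l. eapply Rle_trans; [apply clip_le_piece; auto; try lra|].
    + destruct HI as [HI _]; apply HI; auto.
    + apply (EF_le n v alpha I a b); auto.
  - rewrite clip_nov; auto; lra.
Qed.

Lemma val_le1 n v Js a : (forall a, (a < n)%nat -> is_valuation (v a)) -> is_allocation n Js ->
  (a < n)%nat -> 0 <= val v a (Js a) <= 1.
Proof.
  intros Hv HJs Han. pose proof (Hv a Han) as Hw.
  destruct (proj1 HJs a Han) as [H0 [H1 H2]]. unfold val.
  split. apply (w_nonneg _ Hw); auto.
  assert (H3 : v a 0 1 = 1) by (destruct Hw as [_ [H _]]; auto).
  rewrite <- H3. apply (w_mono _ Hw); lra.
Qed.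

Lemma Rpower_pos x y : 0 < Rpower x y.
Proof. unfold Rpower; apply exp_pos. Qed.

Lemma rpow_pos x y : 0 < x -> rpow x y = Rpower x y.
Proof. intros; unfold rpow; destruct Req_EM_T; [lra|auto]. Qed.

Lemma rpow_nonneg x y : 0 <= rpow x y.
Proof. unfold rpow; destruct Req_EM_T; [lra|]. left; apply Rpower_pos. Qed.

Lemma rpow_le x y c : 0 <= x <= y -> 0 <= c -> rpow x c <= rpow y c.
Proof.
  intros Hx Hc. destruct (Req_EM_T x 0) as [->|Hne].
  - unfold rpow at 1; destruct Req_EM_T; [|lra]. apply rpow_nonneg.
  - rewrite !rpow_pos by lra. apply Rle_Rpower_l; lra.
Qed.

Lemma Rpower_one c : Rpower 1 c = 1.
Proof. unfold Rpower. rewrite ln_1, Rmult_0_r, exp_0. auto. Qed.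

Lemma Rpower_inv x c : 0 < x -> Rpower (/ x) c = / Rpower x c.
Proof.
  intros Hx. pose proof (Rpower_pos x c).
  assert (Rpower (/x) c * Rpower x c = 1).
  { rewrite Rpower_mult_distr by (try apply Rinv_0_lt_compat; lra).
    rewrite Rinv_l by lra. apply Rpower_one. }
  field_simplify_eq; [lra|]. lra.
Qed.

Lemma analysis n (Hn : (1 <= n)%nat) alpha (Ha : 1 <= alpha) rho (Hr : 0 < rho <= 1)
  (Y X K : nat -> R) :
  (forall a, (a < n)%nat -> 0 <= Y a <= 1) ->
  (forall a, (a < n)%nat -> 0 <= K a) ->
  (forall a, (a < n)%nat -> Y a <= K a * (alpha * X a)) ->
  (forall a, (a < n)%nat -> 1 <= INR n * (alpha * X a)) ->
  Rsum n K <= 2 * INR n ->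
  rpow (/ INR n * Rsum n (fun a => rpow (Y a) rho)) (/ rho) <=
  2 * alpha * Rpower 2 (/ rho) * Rpower (INR n) (rho / (rho + 1)) *
  rpow (/ INR n * Rsum n (fun a => rpow (X a) rho)) (/ rho).
Proof.
  intros HY HK HYK HX HsK.
  set (N := INR n) in *.
  assert (HN : 1 <= N) by (unfold N; apply (le_INR 1); auto).
  set (p := rho) in *.
  assert (HXp : forall a, (a < n)%nat -> 0 < X a).
  { intros a Han. specialize (HX a Han). destruct (Rlt_le_dec 0 (X a)); auto. assert (0 <= N * alpha) by nra. nra. }
  set (c := Rpower N (p / (p + 1))).
  set (T := Rpower 2 (/ (p + 1)) * c).
  assert (HT : 0 < T) by (unfold T, c; apply Rmult_lt_0_compat; apply Rpower_pos).
  set (ap := Rpower alpha p). set (Tp := Rpower T p).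
  assert (Hap : 0 < ap) by apply Rpower_pos.
  assert (HTp : 0 < Tp) by apply Rpower_pos.
  assert (P : forall a, (a < n)%nat -> rpow (Y a) p <= ap * Tp * Rpower (X a) p + K a / T).
  { intros a Han. pose proof (HY a Han). pose proof (HK a Han). pose proof (HYK a Han).
    pose proof (HXp a Han). pose proof (Rpower_pos (X a) p).
    assert (0 <= K a / T) by (unfold Rdiv; apply Rmult_le_pos; [lra|left; apply Rinv_0_lt_compat; lra]).
    destruct (Rle_lt_dec (K a) T).
    - assert (Y a <= alpha * T * X a) by (assert (0 < alpha * X a) by nra; nra).
      eapply Rle_trans; [apply (rpow_le _ (alpha * T * X a)); lra|].
      rewrite rpow_pos by (apply Rmult_lt_0_compat; [apply Rmult_lt_0_compat|]; lra).
      rewrite <- !Rpower_mult_distr by (try apply Rmult_lt_0_compat; lra). rewrite <- (Rpower_mult_distr alpha T) by lra. unfold ap, Tp. lra.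
    - eapply Rle_trans; [apply (rpow_le _ 1); lra|]. rewrite rpow_pos, Rpower_one by lra.
      assert (1 <= K a / T). { apply Rmult_le_reg_r with T; auto. unfold Rdiv.
        rewrite Rmult_assoc, Rinv_l by lra. lra. }
      assert (0 <= ap * Tp * Rpower (X a) p) by (left; repeat apply Rmult_lt_0_compat; auto). lra. }
  set (S := Rsum n (fun a => rpow (X a) p)).
  assert (HS : S = Rsum n (fun a => Rpower (X a) p)).
  { apply Rsum_ext; intros; apply rpow_pos; auto. }
  set (Q := Rpower N p * ap).
  assert (Low : forall a, (a < n)%nat -> 1 <= Q * Rpower (X a) p).
  { intros a Han. specialize (HX a Han). pose proof (HXp a Han).
    assert (/ (N * alpha) <= X a).
    { apply Rmult_le_reg_l with (N * alpha); [nra|]. rewrite Rinv_r by nra. lra. }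
    assert (HL0 : Rpower (/ (N * alpha)) p <= Rpower (X a) p).
    { apply Rle_Rpower_l; [lra|]. split; auto. apply Rinv_0_lt_compat; nra. }
    rewrite Rpower_inv in HL0 by nra. rewrite <- Rpower_mult_distr in HL0 by lra.
    unfold Q, ap. pose proof (Rpower_pos N p). pose proof (Rpower_pos alpha p).
    apply Rmult_le_compat_l with (r := Rpower N p * Rpower alpha p) in HL0; [|nra].
    rewrite Rinv_r in HL0 by nra. lra. }
  assert (HNS : N <= Q * S).
  { replace (Q*S) with (Rsum n (fun a => Rpower (X a) p * Q)) by (rewrite Rsum_scal, HS; ring).
    replace N with (Rsum n (fun _ => 1)) by (rewrite Rsum_const; unfold N; ring).
    apply Rsum_le. intros a Han. specialize (Low a Han). lra. }
  assert (Id : Tp * T = 2 * Rpower N p).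
  { unfold Tp. rewrite <- (Rpower_1 T) at 2 by auto. rewrite <- Rpower_plus.
    unfold T. rewrite <- Rpower_mult_distr by (try apply Rpower_pos; lra).
    unfold c. rewrite !Rpower_mult.
    replace (/ (p + 1) * (p + 1)) with 1 by (field; lra).
    replace (p / (p + 1) * (p + 1)) with p by (field; lra).
    rewrite Rpower_1 by lra. auto. }
  assert (SumY : Rsum n (fun a => rpow (Y a) p) <= 2 * ap * Tp * S).
  { eapply Rle_trans; [apply Rsum_le; apply P|].
    rewrite Rsum_plus.
    replace (Rsum n (fun a => ap * Tp * Rpower (X a) p)) with (ap * Tp * S).
    2:{ rewrite HS. transitivity (Rsum n (fun a => Rpower (X a) p) * (ap * Tp)); [ring|]. rewrite <- Rsum_scal. apply Rsum_ext; intros; ring. }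
    assert (Rsum n (fun a => K a / T) = Rsum n K * / T) by (rewrite <- Rsum_scal; auto).
    rewrite H.
    assert (Rsum n K * / T <= 2 * Q * S / T).
    { unfold Rdiv. apply Rmult_le_compat_r. left; apply Rinv_0_lt_compat; auto. lra. }
    assert (2 * Q * S / T = ap * Tp * S).
    { unfold Q. replace (2 * (Rpower N p * ap) * S) with (ap * S * (2 * Rpower N p)) by ring.
      rewrite <- Id. field. lra. }
    lra. }
  assert (HN0 : 0 < N) by lra.
  assert (HSpos : 0 < S).
  { pose proof (Rpower_pos N p). assert (0 < Q) by (unfold Q; nra). nra. }
  set (B := / N * S).
  assert (HB : 0 < B) by (unfold B; apply Rmult_lt_0_compat; auto; apply Rinv_0_lt_compat; lra).
  set (A := / N * Rsum n (fun a => rpow (Y a) p)).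
  assert (HA : A <= 2 * ap * Tp * B).
  { unfold A, B. pose proof (Rinv_0_lt_compat N HN0).
    replace (2 * ap * Tp * (/ N * S)) with (/ N * (2 * ap * Tp * S)) by ring.
    apply Rmult_le_compat_l; lra. }
  assert (HA0 : 0 <= A).
  { unfold A. apply Rmult_le_pos. left; apply Rinv_0_lt_compat; lra.
    apply Rsum_nonneg; intros; apply rpow_nonneg. }
  assert (Hp0 : 0 < / p) by (apply Rinv_0_lt_compat; lra).
  eapply Rle_trans; [apply (rpow_le A (2 * ap * Tp * B)); lra|].
  assert (H2a : 0 < 2 * ap) by lra.
  assert (H2b : 0 < 2 * ap * Tp) by (apply Rmult_lt_0_compat; lra).
  assert (H2c : 0 < 2 * ap * Tp * B) by (apply Rmult_lt_0_compat; lra).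
  rewrite (rpow_pos (2 * ap * Tp * B)) by lra. rewrite (rpow_pos B) by lra.
  rewrite <- (Rpower_mult_distr (2 * ap * Tp)) by lra.
  rewrite <- (Rpower_mult_distr (2 * ap)) by lra.
  rewrite <- (Rpower_mult_distr 2) by lra.
  unfold ap, Tp. rewrite !Rpower_mult.
  replace (p * / p) with 1 by (field; lra).
  rewrite !Rpower_1 by lra.
  assert (HT2 : T <= 2 * c).
  { unfold T. assert (Rpower 2 (/ (p + 1)) <= 2).
    { rewrite <- (Rpower_1 2) at 2 by lra. apply Rle_Rpower; [lra|].
      rewrite <- Rinv_1. apply Rinv_le_contravar; lra. }
    pose proof (Rpower_pos N (p / (p+1))). unfold c in *. nra. }
  pose proof (Rpower_pos 2 (/ p)). pose proof (Rpower_pos B (/ p)).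
  set (u := Rpower 2 (/ p)) in *. set (z := Rpower B (/ p)) in *.
  assert (0 < u * alpha * z) by (apply Rmult_lt_0_compat; nra).
  unfold c in HT2. fold c in HT2.
  replace (2 * alpha * u * c * z) with (u * alpha * z * (2 * c)) by ring.
  replace (u * alpha * T * z) with (u * alpha * z * T) by ring.
  apply Rmult_le_compat_l; lra.
Qed.

Theorem theorem9 (n : nat) (Hn : (1 <= n)%nat)
  (v : nat -> R -> R -> R) (Hv : forall a, (a < n)%nat -> is_valuation (v a))
  (alpha : R) (Halpha : 1 <= alpha)
  (I : nat -> R * R) (HI : is_allocation n I) (HEF : alpha_EF n v alpha I)
  (rho : R) (Hrho : 0 < rho <= 1)
  (Istar : nat -> R * R) (HIstar : is_allocation n Istar) :
  Mrho n v rho Istar <=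
    2 * alpha * Rpower 2 (/ rho) * Rpower (INR n) (rho / (rho + 1)) * Mrho n v rho I.
Proof.
  unfold Mrho.
  apply (analysis n Hn alpha Halpha rho Hrho
           (fun a => val v a (Istar a)) (fun a => val v a (I a))
           (fun a => Rsum n (fun b => ovind (Istar a) (I b)))).
  - intros a Ha. apply (val_le1 n v Istar a); auto.
  - intros a Ha. apply Rsum_nonneg. intros b Hb. unfold ovind; destruct Rlt_dec; lra.
  - intros a Ha. apply (upper_bound n v alpha I Istar a); auto.
  - intros a Ha. apply (lower_bound n v alpha I a); auto.
  - apply count_pairs; auto.
Qed.
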